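(* Let $G$ be a finite GVZ-group. Then $U(G)=K(G)$. In particular, this holds if $G$ has nilpotence class $2$.
   Context: For $\chi\in\mathrm{Irr}(G)$, the center of $\chi$ is $Z(\chi)=\{g\in G : |\chi(g)|=\chi(1)\}$. $G$ is a GVZ-group if every $\chi\in\mathrm{Irr}(G)$ vanishes on $G\setminus Z(\chi)$. For a nonabelian group $G$, let $\mathcal{X}=\{\chi\in\mathrm{Irr}(G) : Z(\chi)>Z(G)\}$ (strict containment) and define $K(G)=\bigcap_{\chi\in\mathcal{X}}\ker(\chi)$; if $G$ is abelian, set $K(G)=G$. For a normal subgroup $H$ of $G$, $\mathrm{Irr}(G\mid H)$ is the set of $\chi\in\mathrm{Irr}(G)$ with $H\not\le\ker(\chi)$, and $V(G\mid H)$ is the subgroup generated by all $g\in G$ with $\chi(g)\ne0$ for some $\chi\in\mathrm{Irr}(G\mid H)$ (with $V(G\mid 1)=1$). For a normal subgroup $N$, $U(G\mid N)$ is the product of all normal subgroups $H$ of $G$ with $V(G\mid H)\le N$, and $U(G)=U(G\mid Z(G))$. *)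

(* Defs.v *)
From HB Require Import structures.
From mathcomp Require Import all_boot all_order all_algebra all_fingroup all_solvable all_field all_character.
Set Implicit Arguments. Unset Strict Implicit. Unset Printing Implicit Defensive.
Import GroupScope GRing.Theory Num.Theory.
Local Open Scope ring_scope.

Section Defs.
Variable gT : finGroupType.

Definition chi_center (G : {group gT}) (i : Iirr G) : {set gT} :=
  [set g in G | `|'chi_i g| == 'chi_i 1%g].

Definition GVZ (G : {group gT}) : Prop :=
  forall i : Iirr G, forall g, g \in G -> g \notin chi_center i -> 'chi_i g = 0.

Definition Kgrp (G : {group gT}) : {set gT} :=
  if abelian G then G
  else G :&: \bigcap_(i : Iirr G | 'Z(G) \proper chi_center i) cfker 'chi_i.

Definition irr_over (G : {group gT}) (H : {set gT}) (i : Iirr G) : bool :=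
  ~~ (H \subset cfker 'chi_i).

Definition Vgrp (G : {group gT}) (H : {set gT}) : {set gT} :=
  if H == 1%g then 1%g
  else <<[set g in G | [exists i : Iirr G, irr_over H i && ('chi_i g != 0)]]>>.

Definition Ugrp_rel (G : {group gT}) (N : {set gT}) : {set gT} :=
  <<\bigcup_(H : {group gT} | (H <| G) && (Vgrp G H \subset N)) (H : {set gT})>>.

Definition Ugrp (G : {group gT}) : {set gT} := Ugrp_rel G 'Z(G).

End Defs.

(* Main.v *)
Require Import Defs.
From mathcomp Require Import all_boot all_order all_algebra all_fingroup all_solvable all_field all_character.
Set Implicit Arguments. Unset Strict Implicit. Unset Printing Implicit Defensive.
Import GroupScope GRing.Theory Num.Theory.
Local Open Scope ring_scope.

Section Aux.
Variable gT : finGroupType.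
Variable G : {group gT}.

Lemma chi_centerE (i : Iirr G) : chi_center i = 'Z('chi_i)%CF.
Proof.
apply/setP=> x; rewrite inE; case Gx: (x \in G) => /=.
  by rewrite irr_cfcenterE.
apply/esym/negbTE; apply: contraFN Gx => /(subsetP (cfcenter_sub _)); apply.
Qed.

Lemma ZG_sub (i : Iirr G) : 'Z(G) \subset chi_center i.
Proof. by rewrite chi_centerE -cap_cfcenter_irr; exact: bigcap_inf. Qed.

Lemma class2_GVZ : nil_class G = 2 -> GVZ G.
Proof.
move=> c2 i g Gg ng.
have ab : abelian (G / 'Z('chi_i)%CF).
  apply: sub_der1_abelian; have := ZG_sub i; rewrite chi_centerE => H.
  apply: subset_trans H.
  by rewrite -nil_class2 c2.
have := (irr1_bound i).2; rewrite irr1_abelian_bound // eqxx => /esym Hon.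
move/cfun_onP: Hon; apply; by rewrite -chi_centerE.
Qed.
End Aux.

Theorem lemma6p14 (gT : finGroupType) (G : {group gT}) :
  (GVZ G \/ (nilpotent G /\ nil_class G = 2)) -> Ugrp G = Kgrp G.
Proof.
move=> hyp; have gvz : GVZ G by case: hyp => [//|[_ /class2_GVZ]].
have nz_of_center : forall (i : Iirr G) g, g \in chi_center i -> 'chi_i g != 0.
  move=> i g; rewrite inE => /andP[_ /eqP e]; rewrite -normr_eq0 e irr1_neq0 //.
apply/eqP; rewrite eqEsubset; apply/andP; split.
- rewrite /Ugrp /Ugrp_rel /Kgrp; case: ifP => abG.
    rewrite gen_subG; apply/bigcupsP => H /andP[/normal_sub sHG _] //.
  rewrite gen_subG; apply/bigcupsP => H /andP[nHG sV].
  rewrite subsetI normal_sub //=; apply/bigcapsP => i Pi.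
  apply/negPn/negP => nsub.
  have [_ [g gZ gnZ]] := properP Pi.
  move: sV; rewrite /Vgrp; case: eqP => [H1|_].
    by move: nsub; rewrite H1 sub1G.
  move/subsetP => sV; move/negP: gnZ; apply; apply: sV; apply: mem_gen.
  rewrite inE; apply/andP; split; first by move: gZ; rewrite inE => /andP[].
  by apply/existsP; exists i; rewrite /irr_over nsub nz_of_center.
- have VsubG : forall H : {set gT}, Vgrp G H \subset G.
    move=> H; rewrite /Vgrp; case: eqP => _; first exact: sub1G.
    by rewrite gen_subG; apply/subsetP => x; rewrite inE => /andP[].
  rewrite /Ugrp /Ugrp_rel /Kgrp; case: ifP => abG.
    apply: sub_gen; apply: (bigcup_sup G).
    apply/andP; split; [exact: normal_refl | by rewrite (center_idP abG) VsubG].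
  set K := (G :&: _).
  have KG : group_set K by rewrite groupP.
  pose KK := Group KG.
  have nKG : KK <| G.
    rewrite /= /K; apply: (big_ind (fun X => G :&: X <| G)).
    - by rewrite setIT normal_refl.
    - by move=> X Y nX nY; rewrite setIIr; apply: normalI.
    - by move=> i _; rewrite (setIidPr (cfker_sub _)) cfker_normal.
  apply: sub_gen; apply: (bigcup_sup KK).
  rewrite nKG /= /Vgrp; case: eqP => _; first exact: sub1G.
  rewrite gen_subG; apply/subsetP => g; rewrite inE => /andP[Gg /existsP[i /andP[ov nz]]].
  have notP : ~~ ('Z(G) \proper chi_center i).
    apply: contra ov => Pi; apply: subset_trans (subsetIr _ _) _.
    exact: (bigcap_inf i Pi).
  move: notP; rewrite properE ZG_sub /= negbK => /subsetP; apply.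
  by apply: contraR nz => ng; rewrite (gvz i g Gg ng).
Qed.
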